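(* Let $N$ be a sub-sound tWF net, $M$ a sub-sound pWF net whose node set is disjoint from that of $N$, and $p$ a place of $N$. Then the tWF net $N\otimes_p M$ is sub-sound.
   Context: Petri nets and markings. A Petri net is a triple $(P,T,F)$ with $P$ a finite set of places, $T$ a finite set of transitions, $P\cap T=\emptyset$, and $F\subseteq (P\times T)\cup(T\times P)$. For a node $x$, $\bullet x=\{y\mid (y,x)\in F\}$, $x\bullet=\{y\mid (x,y)\in F\}$. A marking is a multiset over $P$ (a function $P\to\mathbb N$); sets of places are identified with bags of multiplicity one, $+,-,\le$ are pointwise, and $k.m$ is the sum of $k$ copies of $m$. Transition $t$ is enabled at $m$ iff $\bullet t\le m$, firing gives $m-\bullet t+t\bullet$, and $m\xrightarrow{*}m'$ denotes reachability by a finite (possibly empty) firing sequence. Workflow nets. A pWF net is $(P,T,F,I,O)$ with $(P,T,F)$ a Petri net, $I,O\subseteq P$ non-empty, every node reachable by a directed path from some node of $I$, and some node of $O$ reachable from every node. A tWF net is the same with $I,O$ non-empty subsets of $T$. Input nodes may have incoming edges and output nodes outgoing edges. The place-completion $\mathrm{pc}(N)$ of a tWF net $N=(P,T,F,I,O)$ is obtained by adding two fresh places $p_i,p_o$ with edges $(p_i,t)$ for all $t\in I$ and $(t,p_o)$ for all $t\in O$, and taking input set $\{p_i\}$ and output set $\{p_o\}$. Sub-soundness. A pWF net is sub-sound if for all integers $k\ge k'\ge 0$ and every marking $m'$: if $k.I\xrightarrow{*}m'+k'.O$ then $m'\xrightarrow{*}(k-k').O$. A tWF net is sub-sound iff its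 place-completion is. Place substitution. For a WF net $N=(P,T,F,I,O)$ and a pWF net $M=(P',T',F',I',O')$ with disjoint node sets and $p\in P$, $N\otimes_p M$ is obtained from $N$ by deleting $p$ and all edges incident to $p$, adding all nodes and edges of $M$, adding an edge $(t,p')$ for each $t\in\bullet_N p$ and $p'\in I'$, and an edge $(p',t)$ for each $p'\in O'$ and $t\in p\bullet_N$; its input set is $(I\setminus\{p\})\cup I'$ if $p\in I$ and $I$ otherwise, and its output set is $(O\setminus\{p\})\cup O'$ if $p\in O$ and $O$ otherwise. *)

(* Defs.v *)
From mathcomp Require Import all_boot.
Set Implicit Arguments. Unset Strict Implicit. Unset Printing Implicit Defensive.

(* A Petri net (P, T, F) with P, T disjoint finite types of places and
   transitions; the flow relation F is split into its P x T part [pre]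
   and its T x P part [post]. *)
Record PN (P T : finType) := MkPN {
  pre  : P -> T -> bool;
  post : T -> P -> bool
}.

Definition flow (P T : finType) (N : PN P T) : rel (P + T)%type :=
  fun x y => match x, y with
             | inl q, inr t => pre N q t
             | inr t, inl q => post N t q
             | _, _ => false
             end.

Definition marking (P : finType) := {ffun P -> nat}.

Definition set_bag (P : finType) (A : {set P}) : marking P :=
  [ffun q => nat_of_bool (q \in A)].
Definition mscale (P : finType) (k : nat) (m : marking P) : marking P :=
  [ffun q => k * m q].
Definition madd (P : finType) (m1 m2 : marking P) : marking P :=
  [ffun q => m1 q + m2 q].

Definition enabled (P T : finType) (N : PN P T) (m : marking P) (t : T) : Prop :=
  forall q, nat_of_bool (pre N q t) <= m q.
Definition fire (P T : finType) (N : PN P T) (m : marking P) (t : T) : marking P :=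
  [ffun q => m q - nat_of_bool (pre N q t) + nat_of_bool (post N t q)].

Inductive reach (P T : finType) (N : PN P T) : marking P -> marking P -> Prop :=
| reach_refl m : reach N m m
| reach_step m t m' : enabled N m t -> reach N (fire N m t) m' -> reach N m m'.

Definition WF_cond (P T : finType) (N : PN P T) (I O : {set (P + T)%type}) : Prop :=
  I != set0 /\ O != set0 /\
  (forall x, exists2 i, i \in I & connect (flow N) i x) /\
  (forall x, exists2 o, o \in O & connect (flow N) x o).

Definition is_pWF (P T : finType) (N : PN P T) (I O : {set P}) : Prop :=
  WF_cond N (inl @: I) (inl @: O).
Definition is_tWF (P T : finType) (N : PN P T) (I O : {set T}) : Prop :=
  WF_cond N (inr @: I) (inr @: O).

Definition subsound_p (P T : finType) (N : PN P T) (I O : {set P}) : Prop :=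
  forall (k k' : nat) (m' : marking P), k' <= k ->
    reach N (mscale k (set_bag I)) (madd m' (mscale k' (set_bag O))) ->
    reach N m' (mscale (k - k') (set_bag O)).

(* Place-completion of a tWF net: the new places are inr true (p_i) and
   inr false (p_o). *)
Definition pc_net (P T : finType) (N : PN P T) (I O : {set T}) : PN (P + bool)%type T :=
  MkPN (fun q t => match q with
                   | inl q0 => pre N q0 t
                   | inr true => t \in I
                   | inr false => false
                   end)
       (fun t q => match q with
                   | inl q0 => post N t q0
                   | inr true => false
                   | inr false => t \in O
                   end).

Definition subsound_t (P T : finType) (N : PN P T) (I O : {set T}) : Prop :=
  subsound_p (pc_net N I O) [set inr true] [set inr false].

(* Place substitution N (x)_p M, nodes of N and M being disjoint by
   construction (disjoint sums).  Places: those of N other than p, plus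
   those of M; transitions: those of N plus those of M. *)
Definition subst_places (P : finType) (p : P) := {q : P | q != p}.

Definition subst_net (P T P' T' : finType) (N : PN P T) (p : P)
    (M : PN P' T') (I' O' : {set P'})
  : PN (subst_places p + P')%type (T + T')%type :=
  MkPN (fun q t => match q, t with
                   | inl q0, inl t0 => pre N (val q0) t0
                   | inl _, inr _ => false
                   | inr q', inl t0 => (q' \in O') && pre N p t0
                   | inr q', inr t' => pre M q' t'
                   end)
       (fun t q => match t, q with
                   | inl t0, inl q0 => post N t0 (val q0)
                   | inl t0, inr q' => post N t0 p && (q' \in I')
                   | inr _, inl _ => false
                   | inr t', inr q' => post M t' q'
                   end).

(* Main.v *)
Require Import Defs.
From mathcomp Require Import all_boot.
From mathcomp Require Import zify.
Set Implicit Arguments. Unset Strict Implicit. Unset Printing Implicit Defensive.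

Section Gen.
Variables (P T : finType) (N : PN P T).

Lemma reach_trans m1 m2 m3 : reach N m1 m2 -> reach N m2 m3 -> reach N m1 m3.
Proof. elim=> [//|m t m' en _ IH] H; exact: reach_step en (IH H). Qed.

Lemma reach_last m1 m2 t : reach N m1 m2 -> enabled N m2 t -> reach N m1 (fire N m2 t).
Proof. move=> H en; apply: reach_trans H _; exact: reach_step en (reach_refl _ _). Qed.

Lemma reach_madd z m1 m2 : reach N m1 m2 -> reach N (madd z m1) (madd z m2).
Proof.
elim=> [m|m t m' en _ IH]; first exact: reach_refl.
have en' : enabled N (madd z m) t.
  by move=> q; rewrite ffunE; apply: leq_trans (en q) (leq_addl _ _).
apply: reach_step en' _.
suff -> : fire N (madd z m) t = madd z (fire N m t) by [].
apply/ffunP=> q; rewrite !ffunE; move: (en q).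
by case: (pre N q t); case: (post N t q) => /=; lia.
Qed.

Lemma reach_zero m m' : reach N m m' -> (forall t, exists q, post N t q) ->
  (forall q, m' q = 0) -> forall q, m q = 0.
Proof.
elim=> [//|m0 t m1 en _ IH] hp h0.
case: (hp t) => q hq; have := IH hp h0 q; rewrite ffunE hq /=; lia.
Qed.
End Gen.

Section Main.
Variables (P T P' T' : finType) (N : PN P T) (I O : {set T})
    (M : PN P' T') (I' O' : {set P'}) (p : P).
Hypothesis wM : is_pWF M I' O'.
Hypothesis sM : subsound_p M I' O'.

Local Notation QC := ((subst_places p + P') + bool)%type.
Local Notation Cp := (pc_net (subst_net N p M I' O') (inl @: I) (inl @: O)).
Local Notation Np := (pc_net N I O).

Lemma memL (A : {set T}) t : (@inl T T' t \in inl @: A) = (t \in A).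
Proof. by rewrite mem_imset //; move=> x y [->]. Qed.
Lemma memR (A : {set T}) t : (@inr T T' t \in inl @: A) = false.
Proof. by apply/imsetP=> [[x _]]. Qed.

Definition muC (x : marking QC) : marking P' := [ffun q' => x (inl (inr q'))].
Definition nuC (x : marking QC) (n : nat) : marking (P + bool)%type :=
  [ffun q => match q with
    | inl q0 => match (insub q0 : option (subst_places p)) with
                | Some s => x (inl (inl s)) | None => n end
    | inr b => x (inr b) end].
Definition emb (mu : marking P') : marking QC :=
  [ffun q => match q with inl (inr q') => mu q' | _ => 0 end].
Definition liftm (nu : marking (P + bool)%type) : marking QC :=
  [ffun q => match q with
   | inl (inl s) => nu (inl (val s))
   | inl (inr q') => nu (inl p) * (q' \in O')
   | inr b => nu (inr b) end].

Lemma post_ex t : exists q, post M t q.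
Proof.
case: wM => _ [_ [_ H]]; case: (H (inr t)) => o /imsetP [q _ ->].
case/connectP => [[|y s]] //= /andP [hy _] _.
by case: y hy => // q'; exists q'.
Qed.

Lemma O'_ex : exists q, q \in O'.
Proof.
case: wM => _ [/set0Pn [x /imsetP [q hq _]] _]; by exists q.
Qed.

Lemma cle a c mu :
  reach M (mscale a (set_bag I')) (madd mu (mscale c (set_bag O'))) -> c <= a.
Proof.
move=> H; rewrite leqNgt; apply/negP => ltac.
have E : madd mu (mscale c (set_bag O')) =
   madd (madd mu (mscale (c - a) (set_bag O'))) (mscale a (set_bag O')).
  apply/ffunP=> q; rewrite !ffunE; case: (q \in O') => /=; lia.
rewrite E in H; have := sM (leqnn a) H; rewrite subnn => H2.
case: O'_ex => q hq.
have := reach_zero H2 post_ex _ q.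
rewrite !ffunE hq /=.
have h0 : forall q0, mscale 0 (set_bag O') q0 = 0 by move=> q0; rewrite ffunE.
move/(_ h0); lia.
Qed.

Lemma runM b : reach M (mscale b (set_bag I')) (mscale b (set_bag O')).
Proof.
have H := @sM b 0 (mscale b (set_bag I')) (leq0n b).
rewrite subn0 in H; apply: H.
suff -> : madd (mscale b (set_bag I')) (mscale 0 (set_bag O')) = mscale b (set_bag I').
  exact: reach_refl.
by apply/ffunP=> q; rewrite !ffunE; lia.
Qed.

Lemma emb_reach mu1 mu2 : reach M mu1 mu2 -> reach Cp (emb mu1) (emb mu2).
Proof.
elim=> [m|m t m' en _ IH]; first exact: reach_refl.
have en' : enabled Cp (emb m) (inr t).
  by case=> [[s|q']|[]]; rewrite ffunE /= ?memR //; apply: en.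
apply: reach_step en' _.
suff -> : fire Cp (emb m) (inr t) = emb (fire M m t) by [].
by apply/ffunP=> -[[s|q']|[]]; rewrite !ffunE /= ?memR.
Qed.

Ltac bc x := case: (boolP x) => _.

Definition Inv (s : marking (P + bool)%type) (x : marking QC) :=
  exists a c, reach M (mscale a (set_bag I')) (madd (muC x) (mscale c (set_bag O')))
           /\ reach Np s (nuC x (a - c)).

Lemma Inv_step s x t : Inv s x -> enabled Cp x t -> Inv s (fire Cp x t).
Proof.
case=> a [c [HM HN]] en; case: t en => [t0|t'] en.
- set b := pre N p t0; set d := post N t0 p.
  have enO : forall q', (q' \in O') && b <= muC x q'.
    by move=> q'; rewrite ffunE; apply: (en (inl (inr q'))).
  pose mu2 : marking P' := [ffun q' => muC x q' - ((q' \in O') && b)].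
  have HM2 : reach M (mscale a (set_bag I')) (madd mu2 (mscale (c + b) (set_bag O'))).
    suff <- : madd (muC x) (mscale c (set_bag O')) = madd mu2 (mscale (c + b) (set_bag O')) by [].
    apply/ffunP=> q'; move: (enO q'); rewrite !ffunE.
    by case: (q' \in O'); bc b => /=; lia.
  have lecb := cle HM2.
  exists (a + d), (c + b); split.
    have H3 := reach_madd (mscale d (set_bag I')) HM2.
    have E1 : madd (mscale d (set_bag I')) (mscale a (set_bag I')) = mscale (a + d) (set_bag I').
      by apply/ffunP=> q'; rewrite !ffunE; lia.
    have E2 : madd (mscale d (set_bag I')) (madd mu2 (mscale (c + b) (set_bag O'))) =
              madd (muC (fire Cp x (inl t0))) (mscale (c + b) (set_bag O')).
      apply/ffunP=> q'; move: (enO q'); rewrite !ffunE /= -/b -/d.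
      by case: (q' \in O'); case: (q' \in I'); bc b; bc d => /=; set X := x (inl (inr q')); lia.
    by rewrite -E1 -E2.
  have enN : enabled Np (nuC x (a - c)) t0.
    case=> [q0|[]]; rewrite ffunE /=.
    + case: insubP => [s0 _ <-|/negPn/eqP ->]; first exact: (en (inl (inl s0))).
      rewrite -/b; move: lecb; bc b => /=; lia.
    + by have := en (inr true); rewrite /= memL.
    + by [].
  apply: (reach_trans HN); suff -> : nuC (fire Cp x (inl t0)) (a + d - (c + b)) =
                  fire Np (nuC x (a - c)) t0 by apply: reach_last (reach_refl _ _) enN.
  apply/ffunP=> -[q0|[]]; rewrite !ffunE /=.
  + case: insubP => [s0 _ <-|/negPn/eqP ->]; rewrite ?ffunE //= -/b -/d.
    move: lecb; bc b; bc d => /=; lia.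
  + by rewrite memL.
  + by rewrite memL.
- exists a, c; split.
  + have enM : enabled M (muC x) t'.
      by move=> q'; rewrite ffunE; apply: (en (inl (inr q'))).
    have enM' : enabled M (madd (muC x) (mscale c (set_bag O'))) t'.
      by move=> q'; rewrite ffunE; apply: leq_trans (enM q') (leq_addr _ _).
    have := reach_last HM enM'.
    suff -> : fire M (madd (muC x) (mscale c (set_bag O'))) t' =
              madd (muC (fire Cp x (inr t'))) (mscale c (set_bag O')) by [].
    apply/ffunP=> q'; move: (enM q'); rewrite !ffunE /=.
    by case: (pre M q' t'); case: (post M t' q'); case: (q' \in O') => /=; set X := x (inl (inr q')); lia.
  + suff -> : nuC (fire Cp x (inr t')) (a - c) = nuC x (a - c) by [].
    apply/ffunP=> -[q0|[]]; rewrite !ffunE /=.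
    * by case: insubP => [s0 _ _|_] //; rewrite ffunE /= addn0 subn0.
    * by rewrite memR addn0 subn0.
    * by rewrite memR addn0 subn0.
Qed.

Lemma Inv_reach s x y : reach Cp x y -> Inv s x -> Inv s y.
Proof. elim=> [//|m t m' en _ IH] H; exact/IH/Inv_step. Qed.

Lemma lift_reach nu1 nu2 : reach Np nu1 nu2 -> reach Cp (liftm nu1) (liftm nu2).
Proof.
elim=> [m|nu t0 nu' en _ IH]; first exact: reach_refl.
apply: reach_trans IH.
set b := pre N p t0; set d := post N t0 p.
have enp : b <= nu (inl p) := en (inl p).
have enC : enabled Cp (liftm nu) (inl t0).
  case=> [[s|q']|[]]; rewrite ffunE /=.
  + exact: (en (inl (val s))).
  + rewrite -/b; move: enp; case: (q' \in O'); bc b => /=; lia.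
  + by rewrite memL; apply: (en (inr true)).
  + by [].
apply: reach_step enC _.
pose Z : marking QC := [ffun q => match q with
   | inl (inr q') => (nu (inl p) - b) * (q' \in O')
   | _ => liftm (fire Np nu t0) q end].
have E1 : fire Cp (liftm nu) (inl t0) = madd Z (emb (mscale d (set_bag I'))).
  apply/ffunP=> -[[s|q']|[]]; rewrite !ffunE /= ?memL ?addn0 //.
  rewrite -/b -/d; case: (q' \in O'); case: (q' \in I'); bc b; bc d => /=; lia.
have E2 : liftm (fire Np nu t0) = madd Z (emb (mscale d (set_bag O'))).
  apply/ffunP=> -[[s|q']|[]]; rewrite !ffunE /= ?addn0 //.
  rewrite -/b -/d; case: (q' \in O'); bc b; bc d => /=; lia.
rewrite E1 E2; apply: reach_madd; apply: emb_reach; exact: runM.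
Qed.

End Main.

Lemma main_sec (P T P' T' : finType) (N : PN P T) (I O : {set T})
    (M : PN P' T') (I' O' : {set P'}) (p : P) :
  is_tWF N I O -> subsound_t N I O ->
  is_pWF M I' O' -> subsound_p M I' O' ->
  subsound_t (subst_net N p M I' O') (inl @: I) (inl @: O).
Proof.
move=> _ sN wM sM k k' m' lekk' H.
pose x0 : marking ((subst_places p + P') + bool)%type := mscale k (set_bag [set inr true]).
have Hinit : Inv N I O M I' O' (mscale k (set_bag [set inr true])) x0.
  exists 0, 0; split.
  + suff -> : madd (muC x0) (mscale 0 (set_bag O'))
              = mscale 0 (set_bag I') by apply: reach_refl.
    by apply/ffunP=> q'; rewrite !ffunE !in_set1 /=; lia.
  + suff -> : nuC x0 (0 - 0)
              = mscale k (set_bag [set inr true]) by apply: reach_refl.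
    apply/ffunP=> -[q0|bb]; rewrite !ffunE /= ?in_set1 //.
    by case: insubP => [s0 _ _|_]; rewrite ?ffunE ?in_set1 /=; lia.
case: (Inv_reach wM sM H Hinit) => a [c [HM HN]].
set n := a - c.
have Emu : muC (madd m' (mscale k' (set_bag [set inr false]))) = muC m'.
  by apply/ffunP=> q'; rewrite !ffunE in_set1 /= muln0 addn0.
rewrite Emu in HM.
have lca := cle wM sM HM.
have HMr : reach M (muC m') (mscale n (set_bag O')) := sM a c (muC m') lca HM.
have Enu : nuC (madd m' (mscale k' (set_bag [set inr false]))) n =
           madd (nuC m' n) (mscale k' (set_bag [set inr false])).
  apply/ffunP=> -[q0|bb]; rewrite !ffunE /= ?in_set1 //.
  by case: insubP => [s0 _ _|_]; rewrite ?ffunE ?in_set1 /= ?muln0 ?addn0.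
rewrite Enu in HN.
have HN2 := sN k k' (nuC m' n) lekk' HN.
have HL := lift_reach p sM HN2.
have El : liftm O' p (mscale (k - k') (set_bag [set inr false])) =
          mscale (k - k') (set_bag [set inr false]).
  by apply/ffunP=> -[[s|q']|bb]; rewrite !ffunE ?in_set1 /= ?muln0.
rewrite El in HL; apply: reach_trans HL.
pose W : marking ((subst_places p + P') + bool)%type :=
  [ffun q => match q with inl (inr _) => 0 | _ => m' q end].
have E1 : m' = madd W (emb p (muC m')).
  by apply/ffunP=> -[[s|q']|bb]; rewrite !ffunE /= ?addn0.
have E2 : liftm O' p (nuC m' n) = madd W (emb p (mscale n (set_bag O'))).
  apply/ffunP=> -[[s|q']|bb]; rewrite !ffunE /= ?addn0.
  + by rewrite valK.
  + by rewrite insubF ?eqxx.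
  + by [].
rewrite {1}E1 E2; apply: reach_madd; exact: emb_reach.
Qed.

Theorem mainTheorem9 (P T P' T' : finType) (N : PN P T) (I O : {set T})
    (M : PN P' T') (I' O' : {set P'}) (p : P) :
  is_tWF N I O -> subsound_t N I O ->
  is_pWF M I' O' -> subsound_p M I' O' ->
  subsound_t (subst_net N p M I' O') (inl @: I) (inl @: O).
Proof. exact: main_sec. Qed.
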